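(* Let $n\ge2$, $r\ge1$, let $V_1,\dots,V_r\in\mathrm{Mat}(n,\mathbb{C})$ satisfy $\operatorname{tr}(V_s^*V_m)=\delta_{sm}$, and define $$P_{\mathcal T}=\sum_{s=1}^r\sum_{a,b,c,d=1}^n (V_s)_{ab}(\bar V_s)_{cd}\,E^{(n)}_{ac}\otimes E^{(n)}_{bd},\qquad A_{\mathcal T}=\sum_{s,m=1}^r E^{(r)}_{sm}\otimes\Big(\sum_{i=1}^r V_i\bar V_sV_m^tV_i^*\Big).$$ For $A\in\mathrm{Mat}(rn,\mathbb{C})$ and a positive integer $k$ let $$G[A;k]=\big(k-rn+\operatorname{tr}A\big)^2-k\big(k-rn+\operatorname{tr}A^2\big).$$ If, for some real $Q>0$, $P_{\mathcal T}$ is a solution of $P^*=P$, $P^2=P$, $Q^2(P_1P_2P_1-P_2P_1P_2)=P_1-P_2$ (with $P_1=P_{\mathcal T}\otimes I_n$, $P_2=I_n\otimes P_{\mathcal T}$), then there exists a positive integer $k$ such that $G[A_{\mathcal T};k]=0$.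
   Context: $E^{(p)}_{ab}\in\mathrm{Mat}(p,\mathbb{C})$ is the matrix unit with $(E^{(p)}_{ab})_{ij}=\delta_{ai}\delta_{bj}$; $\bar V$ is entrywise complex conjugate, $V^t$ transpose, $V^*$ conjugate transpose; $\otimes$ is the Kronecker product. *)

(* Defs.v *)
(* complex numbers are R[i] (mathcomp-real-closed complex) over
   R : realType (MathComp-Analysis' real numbers), Kronecker product is
   mathcomp-real-closed's tensmx (standard index convention (i,j) |-> i*n+j). *)
From HB Require Import structures.
From mathcomp Require Import all_boot all_order all_algebra.
From mathcomp Require Import reals.
From mathcomp Require Import complex mxtens.
Set Implicit Arguments. Unset Strict Implicit. Unset Printing Implicit Defensive.
Import Order.TTheory GRing.Theory Num.Theory.
Local Open Scope ring_scope.
Local Open Scope complex_scope.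

Definition mxconj (R : realType) m n (A : 'M[R[i]]_(m, n)) : 'M[R[i]]_(m, n) :=
  map_mx (fun z => z^*) A.
Definition mxadj (R : realType) m n (A : 'M[R[i]]_(m, n)) : 'M[R[i]]_(n, m) :=
  (mxconj A)^T.

Definition Eunit {R : realType} {p} (a b : 'I_p) : 'M[R[i]]_p := delta_mx a b.

Definition PT (R : realType) n r (V : 'I_r -> 'M[R[i]]_n) : 'M[R[i]]_(n * n) :=
  \sum_(s < r) \sum_(a < n) \sum_(b < n) \sum_(c < n) \sum_(d < n)
     (V s a b * (V s c d)^*) *: (Eunit a c *t Eunit b d).

Definition AT (R : realType) n r (V : 'I_r -> 'M[R[i]]_n) : 'M[R[i]]_(r * n) :=
  \sum_(s < r) \sum_(m < r)
    (Eunit s m *t (\sum_(i0 < r) V i0 *m mxconj (V s) *m (V m)^T *m mxadj (V i0))).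

Definition Gfun (R : realType) N (A : 'M[R[i]]_N) (k : nat) : R[i] :=
  (k%:R - N%:R + \tr A) ^+ 2 - k%:R * (k%:R - N%:R + \tr (A *m A)).

Definition P1of (R : realType) n (P : 'M[R[i]]_(n * n)) : 'M[R[i]]_(n * n * n) :=
  P *t (1%:M : 'M[R[i]]_n).
Definition P2of (R : realType) n (P : 'M[R[i]]_(n * n)) : 'M[R[i]]_(n * n * n) :=
  castmx (mulnA n n n, mulnA n n n) ((1%:M : 'M[R[i]]_n) *t P).

(* Main.v *)
Require Import Defs.
From HB Require Import structures.
From mathcomp Require Import all_boot all_order all_algebra.
From mathcomp Require Import reals.
From mathcomp Require Import complex mxtens.
From mathcomp Require Import ring.
Set Implicit Arguments. Unset Strict Implicit. Unset Printing Implicit Defensive.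
Import Order.TTheory GRing.Theory Num.Theory.
Local Open Scope ring_scope.
Local Open Scope complex_scope.

Section H.
Variable R : realType.
Local Notation C := R[i].

Lemma sum_tens m n (F : 'I_(m * n) -> C) :
  \sum_(x < m * n) F x = \sum_(i < m) \sum_(j < n) F (mxtens_index (i, j)).
Proof.
rewrite pair_big /=.
rewrite (reindex (@mxtens_index m n)) /=; last first.
  by exists (@mxtens_unindex m n) => x _; rewrite (mxtens_indexK, mxtens_unindexK).
by apply: eq_bigr => -[i j].
Qed.

Lemma sum_delta n (c : 'I_n) (F : 'I_n -> C) :
  \sum_(j < n) (j == c)%:R * F j = F c.
Proof.
rewrite (bigD1 c) //= eqxx mul1r big1 ?addr0 // => j /negbTE ->; by rewrite mul0r.
Qed.

Lemma sum_delta' n (c : 'I_n) (F : 'I_n -> C) :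
  \sum_(j < n) (c == j)%:R * F j = F c.
Proof. by rewrite -(sum_delta c); apply: eq_bigr => j _; rewrite eq_sym. Qed.

Lemma tens_idx_eq m n (p q : 'I_m * 'I_n) :
  (mxtens_index p == mxtens_index q) = (p == q).
Proof. exact: (can_eq (@mxtens_indexK m n)). Qed.

Variables (n r : nat) (V : 'I_r -> 'M[C]_n).

Lemma mxadjE p q (M : 'M[C]_(p, q)) i j : mxadj M i j = (M j i)^*.
Proof. by rewrite !mxE. Qed.

Lemma PTE a b c d :
  PT V (mxtens_index (a, b)) (mxtens_index (c, d)) = \sum_s V s a b * (V s c d)^*.
Proof.
rewrite /PT summxE; apply: eq_bigr => s _.
rewrite summxE.
under eq_bigr => a' _ do rewrite summxE.
under eq_bigr => a' _ do under eq_bigr => b' _ do rewrite summxE.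
under eq_bigr => a' _ do under eq_bigr => b' _ do under eq_bigr => c' _ do rewrite summxE.
under eq_bigr => a' _ do under eq_bigr => b' _ do under eq_bigr => c' _ do
  under eq_bigr => d' _ do rewrite mxE tensmxE /Eunit !mxE.
rewrite (bigD1 a) //= [X in _ + X]big1 ?addr0; last first.
  move=> a' /negbTE ne; rewrite big1 // => b' _; rewrite big1 // => c' _.
  by rewrite big1 // => d' _; rewrite eq_sym ne /= !(mulr0, mul0r).
rewrite (bigD1 b) //= [X in _ + X]big1 ?addr0; last first.
  move=> b' /negbTE ne; rewrite big1 // => c' _.
  by rewrite big1 // => d' _; rewrite (eq_sym b) ne /= !(mulr0, mul0r, andbF).
rewrite (bigD1 c) //= [X in _ + X]big1 ?addr0; last first.
  move=> c' /negbTE ne.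
  by rewrite big1 // => d' _; rewrite (eq_sym c) ne /= !(mulr0, mul0r, andbF).
rewrite (bigD1 d) //= [X in _ + X]big1 ?addr0; last first.
  move=> d' /negbTE ne.
  by rewrite (eq_sym d) ne /= !(mulr0, mul0r, andbF).
by rewrite !eqxx /= !mulr1.
Qed.

Lemma P1E x e y e' :
  P1of (PT V) (mxtens_index (x, e)) (mxtens_index (y, e')) = PT V x y * (e == e')%:R.
Proof. by rewrite /P1of tensmxE mxE. Qed.

Lemma P2E a b e a' b' e' :
  P2of (PT V) (mxtens_index (mxtens_index (a, b), e)) (mxtens_index (mxtens_index (a', b'), e'))
  = (a == a')%:R * PT V (mxtens_index (b, e)) (mxtens_index (b', e')).
Proof.
rewrite /P2of castmxE.
have cE : forall a b e, cast_ord (esym (mulnA n n n)) (mxtens_index (mxtens_index (a, b), e))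
   = mxtens_index (a, mxtens_index (b, e)).
  move=> a0 b0 e0; apply: val_inj => /=.
  by rewrite mulnDl -mulnA addnA.
by rewrite !cE tensmxE mxE.
Qed.

Definition AM (s m : 'I_r) : 'M[C]_n :=
  \sum_(i0 < r) V i0 *m mxconj (V s) *m (V m)^T *m mxadj (V i0).

Lemma ATE s c m c' :
  AT V (mxtens_index (s, c)) (mxtens_index (m, c')) = AM s m c c'.
Proof.
rewrite /AT summxE; under eq_bigr => s0 _ do rewrite summxE.
under eq_bigr => s0 _ do under eq_bigr => m0 _ do rewrite tensmxE /Eunit mxE.
rewrite (bigD1 s) //= [X in _ + X]big1 ?addr0; last first.
  move=> s' /negbTE ne; rewrite big1 // => m' _.
  by rewrite (eq_sym s) ne /= mul0r.
rewrite (bigD1 m) //= [X in _ + X]big1 ?addr0; last first.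
  move=> m' /negbTE ne.
  by rewrite (eq_sym m) ne /= andbF mul0r.
by rewrite !eqxx /= mul1r.
Qed.

Lemma sum_collapse p (c : 'I_p) (F : 'I_p -> C) :
  (forall j, j != c -> F j = 0) -> \sum_j F j = F c.
Proof. by move=> H; rewrite (bigD1 c) //= big1 ?addr0 // => j /H. Qed.

Definition W : 'M[C]_(n * n * n, r * n) := \matrix_(x, y)
  (((@mxtens_unindex n n (@mxtens_unindex (n * n) n x).1).1
     == (@mxtens_unindex r n y).2)%:R
   * V (@mxtens_unindex r n y).1 (@mxtens_unindex n n (@mxtens_unindex (n * n) n x).1).2
       (@mxtens_unindex (n * n) n x).2).

Lemma WE a b e s c :
  W (mxtens_index (mxtens_index (a, b), e)) (mxtens_index (s, c)) = (a == c)%:R * V s b e.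
Proof. by rewrite mxE !mxtens_indexK. Qed.

Hypothesis horth : forall s m : 'I_r, \tr (mxadj (V s) *m V m) = (s == m)%:R.

Lemma WW : mxadj W *m W = 1%:M.
Proof.
apply/matrixP => X Y; case: (mxtens_indexP X) => s c; case: (mxtens_indexP Y) => m c'.
rewrite !mxE sum_tens sum_tens tens_idx_eq xpair_eqE.
under eq_bigr => a _ do under eq_bigr => b _ do under eq_bigr => e _ do
  rewrite mxadjE !WE rmorphM /= conjc_nat.
rewrite (@sum_collapse _ c); last first.
  by move=> a /negbTE ne; rewrite big1 // => b _; rewrite big1 // => e _; rewrite ne !mul0r.
rewrite eqxx; case: (eqVneq c c') => [_|ne]; last first.
  by rewrite andbF big1 // => b _; rewrite big1 // => e _; rewrite mul0r mulr0.
rewrite andbT -horth /mxtrace; under [RHS]eq_bigr => e _ do rewrite mxE.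
rewrite exchange_big /=; apply: eq_bigr => b _; apply: eq_bigr => e _.
by rewrite mxadjE !mul1r.
Qed.

Lemma WWadj : W *m mxadj W = P2of (PT V).
Proof.
apply/matrixP => X Y.
case: (mxtens_indexP X) => ab e; case: (mxtens_indexP ab) => a b.
case: (mxtens_indexP Y) => ab' e'; case: (mxtens_indexP ab') => a' b'.
rewrite P2E PTE !mxE sum_tens exchange_big /=.
under eq_bigr => c _ do under eq_bigr => s _ do rewrite mxadjE !WE rmorphM /= conjc_nat.
rewrite (@sum_collapse _ a); last first.
  by move=> c ne; rewrite big1 // => s _; rewrite eq_sym (negbTE ne) !mul0r.
rewrite mulr_sumr; apply: eq_bigr => s _.
rewrite eqxx (eq_sym a a') mul1r; ring.
Qed.

Lemma WP1E s c a' b' e' :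
  (mxadj W *m P1of (PT V)) (mxtens_index (s, c)) (mxtens_index (mxtens_index (a', b'), e'))
  = \sum_b (V s b e')^* * PT V (mxtens_index (c, b)) (mxtens_index (a', b')).
Proof.
rewrite mxE sum_tens sum_tens.
under eq_bigr => a _ do under eq_bigr => b _ do under eq_bigr => e _ do
  rewrite mxadjE WE P1E rmorphM /= conjc_nat.
rewrite (@sum_collapse _ c); last first.
  by move=> a ne; rewrite big1 // => b _; rewrite big1 // => e _; rewrite (negbTE ne) !mul0r.
apply: eq_bigr => b _.
rewrite (@sum_collapse _ e'); last first.
  by move=> e ne; rewrite (negbTE ne) !mulr0.
by rewrite !eqxx mul1r mulr1.
Qed.

Lemma AWW : mxadj W *m P1of (PT V) *m W = AT V.
Proof.
apply/matrixP => X Y.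
case: (mxtens_indexP X) => s c; case: (mxtens_indexP Y) => m c'.
rewrite ATE /AM mxE sum_tens sum_tens.
under eq_bigr => a _ do under eq_bigr => b _ do under eq_bigr => e _ do
  rewrite WP1E WE.
rewrite (@sum_collapse _ c'); last first.
  by move=> a ne; rewrite big1 // => b _; rewrite big1 // => e _; rewrite (negbTE ne) !mul0r mulr0.
rewrite summxE.
under [RHS]eq_bigr => i _ do rewrite mxE.
under [RHS]eq_bigr => i _ do under eq_bigr => x _ do rewrite mxE mxadjE.
under [RHS]eq_bigr => i _ do under eq_bigr => x _ do under eq_bigr => y _ do rewrite !mxE.
under [RHS]eq_bigr => i _ do under eq_bigr => x _ do under eq_bigr => y _ do under eq_bigr => z _ do rewrite !mxE.
under eq_bigr => b _ do under eq_bigr => e _ do under eq_bigr => z _ do rewrite PTE.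
rewrite eqxx.
under eq_bigr => b _ do under eq_bigr => e _ do rewrite mulr_suml.
under eq_bigr => b _ do under eq_bigr => e _ do under eq_bigr => z _ do rewrite mulr_sumr mulr_suml.
under [RHS]eq_bigr => i _ do under eq_bigr => x _ do rewrite mulr_suml.
under [RHS]eq_bigr => i _ do under eq_bigr => x _ do under eq_bigr => y _ do rewrite !mulr_suml.
rewrite [RHS]exchange_big /=.
under [RHS]eq_bigr => x _ do rewrite exchange_big /=.
under [RHS]eq_bigr => x _ do under eq_bigr => y _ do rewrite exchange_big /=.
apply: eq_bigr => b _; apply: eq_bigr => e _; apply: eq_bigr => z _; apply: eq_bigr => i _.
ring.
Qed.

End H.

Lemma tr_quad (R : realType) N (Y : 'M[R[i]]_N) (c0 : R[i]) :
  Y *m Y = c0 *: Y -> \tr Y = c0 * (\rank Y)%:R.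
Proof.
move=> hY.
have injR := row_free_inj (row_base_free Y).
have injC := row_full_inj (col_base_full Y).
have := mulmx_base Y.
move: injR injC; generalize (col_base Y) (row_base Y) => Cb Rb injR injC eY.
have key : Rb *m Cb = c0 *: 1%:M.
  apply: injR; apply: injC.
  have -> : Cb *m (Rb *m Cb *m Rb) = Y *m Y.
    by rewrite !mulmxA eY -mulmxA eY.
  by rewrite hY -scalemxAl mul1mx -scalemxAr eY.
by rewrite -{1}eY mxtrace_mulC key mxtraceZ mxtrace1.
Qed.

Unset Implicit Arguments.
Set Strict Implicit.

Theorem lemma7 (R : realType) (n r : nat) (V : 'I_r -> 'M[R[i]]_n)
  (hn : (2 <= n)%N) (hr : (1 <= r)%N)
  (horth : forall s m : 'I_r,
     \tr (mxadj (V s) *m V m) = (s == m)%:R)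
  (Q : R) (hQ : 0 < Q)
  (hsa : mxadj (PT V) = PT V)
  (hid : PT V *m PT V = PT V)
  (hrel : let P1 := P1of (PT V) in let P2 := P2of (PT V) in
     (Q ^+ 2)%:C *: (P1 *m P2 *m P1 - P2 *m P1 *m P2) = P1 - P2) :
  exists k : nat, (0 < k)%N /\ Gfun (AT V) k = 0.
Proof.
have WW := WW horth.
have WWadj := WWadj V.
have AWW := AWW V.
move: hrel => /=.
rewrite -WWadj.
set u := (Q ^+ 2)%:C.
move=> hrel.
have h1 : mxadj (W V) *m (P1of (PT V) *m (W V *m mxadj (W V)) *m P1of (PT V)) *m W V
   = AT V *m AT V.
  by rewrite -AWW !mulmxA.
have h2 : mxadj (W V) *m ((W V *m mxadj (W V)) *m P1of (PT V) *m (W V *m mxadj (W V))) *m W V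
   = AT V.
  by rewrite -AWW !mulmxA WW mul1mx -mulmxA WW mulmx1.
have h4 : mxadj (W V) *m (W V *m mxadj (W V)) *m W V = 1%:M.
  by rewrite !mulmxA WW mul1mx WW.
have key : u *: (AT V *m AT V - AT V) = AT V - 1%:M.
  have := congr1 (fun M => mxadj (W V) *m M *m W V) hrel => /=.
  by rewrite -scalemxAr -scalemxAl mulmxBr mulmxBl mulmxBr mulmxBl h1 h2 AWW h4.
have u0 : u != 0 by rewrite fmorph_eq0 expf_eq0 gt_eqF.
move: key; set A := AT V => key.
have AA : A *m A = A + u^-1 *: (A - 1%:M).
  by rewrite -key scalerA mulVf // scale1r addrC subrK.
have hY : (1%:M - A) *m (1%:M - A) = (1 - u^-1) *: (1%:M - A).
  rewrite mulmxBl mul1mx mulmxBr mulmx1 AA scalerBl scale1r opprD opprK addKr.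
  by congr (_ + _); rewrite -scalerN opprB.
have htrY := tr_quad hY.
set f := \rank (1%:M - A) in htrY.
rewrite raddfB /= mxtrace1 in htrY.
have htA : \tr A = (r * n)%:R - (1 - u^-1) * f%:R.
  by rewrite -htrY opprB addrC subrK.
have htAA : \tr (A *m A) = \tr A + u^-1 * (\tr A - (r * n)%:R).
  by rewrite AA mxtraceD mxtraceZ raddfB /= mxtrace1.
have G : forall k : nat, Gfun A k = (1 - u^-1) ^+ 2 * f%:R * (f%:R - k%:R).
  by move=> k; rewrite /Gfun htAA htA; ring.
case: (posnP f) => [f0|fpos].
  by exists 1%N; split => //; rewrite G f0 mulr0 mul0r.
by exists f; split => //; rewrite G subrr mulr0.
Qed.
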